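(* Let $z_i=(y_i',x_i')'$, $i=1,\dots,n$, with $y_i\in\mathbb{R}^q$, $x_i\in\mathbb{R}^p$, be a sample satisfying the multivariate linear model $y_i=B_0'x_i+u_i$ ($B_0\in\mathbb{R}^{p\times q}$). Let $\rho_0,\rho_1$ be $\rho$-functions with $\rho_1\le\rho_0$, let $(\tilde B_n,\tilde\Sigma_n)\in\mathbb{R}^{p\times q}\times\mathcal{S}_q$ be initial estimates with $|\tilde\Sigma_n|=1$, let $\hat\sigma_n=s\big(d_1(\tilde B_n,\tilde\Sigma_n),\dots,d_n(\tilde B_n,\tilde\Sigma_n)\big)$ be the M-scale of the Mahalanobis norms computed with $\rho_0$ and $b=0.5$, and let $$S(B,\Gamma)=\sum_{i=1}^n\rho_1\!\left(\frac{d_i(B,\Gamma)}{\hat\sigma_n}\right).$$ Let $k_n=\max_{\|v\|+\|w\|>0}\#\{i: v'x_i+w'y_i=0\}$ ($v\in\mathbb{R}^p$, $w\in\mathbb{R}^q$). If $k_n/n<0.5$, then there exists a pair $(\hat B_n,\hat\Gamma_n)$ that minimizes $S(B,\Gamma)$ over all $(B,\Gamma)\in\mathbb{R}^{p\times q}\times\mathcal{S}_q$ with $|\Gamma|=1$.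
   Context: $\mathcal{S}_q$ denotes the set of positive definite symmetric $q\times q$ matrices and $|\cdot|$ the determinant. A $\rho$-function is a continuous nondecreasing function of $|u|$ with $\rho(0)=0$, $\sup_u\rho(u)=1$, and $\rho(u)$ strictly increasing for nonnegative $u$ with $\rho(u)<1$. For $B\in\mathbb{R}^{p\times q}$, $\Sigma\in\mathcal{S}_q$, the Mahalanobis norms of the residuals are $d_i(B,\Sigma)=\big((y_i-B'x_i)'\Sigma^{-1}(y_i-B'x_i)\big)^{1/2}$. Given $v=(v_1,\dots,v_n)$, the M-scale $s(v)$ (with $\rho$-function $\rho_0$ and $b\in(0,1)$) is the value $s$ solving $\frac1n\sum_{i=1}^n\rho_0(v_i/s)=b$, or $s=0$ if $\#\{i:v_i=0\}\ge n(1-b)$. *)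

(* Defs.v *)
From HB Require Import structures.
From mathcomp Require Import all_boot all_order all_algebra.
From mathcomp Require Import all_classical all_reals all_analysis.
Set Implicit Arguments. Unset Strict Implicit. Unset Printing Implicit Defensive.
Import Order.TTheory GRing.Theory Num.Theory.
Import numFieldNormedType.Exports.
Local Open Scope ring_scope.

Definition rho_function (R : realType) (rho : R -> R) : Prop :=
  [/\ continuous rho,
      (forall u v : R, `|u| <= `|v| -> rho u <= rho v),
      rho 0 = 0,
      (forall u : R, rho u <= 1) /\ (forall e : R, 0 < e -> exists u, 1 - e < rho u)
    & (forall u v : R, 0 <= u -> u < v -> rho u < 1 -> rho u < rho v)].

Definition posdef (R : realType) (q : nat) (S : 'M[R]_q) : Prop :=
  S^T = S /\ (forall v : 'cV[R]_q, v != 0 -> 0 < (v^T *m S *m v) ord0 ord0).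

Definition mahal (R : realType) (p q : nat) (x : 'cV[R]_p) (y : 'cV[R]_q)
    (B : 'M[R]_(p, q)) (Sigma : 'M[R]_q) : R :=
  let r := y - B^T *m x in Num.sqrt ((r^T *m invmx Sigma *m r) ord0 ord0).

Definition is_Mscale (R : realType) (n : nat) (rho0 : R -> R) (b : R)
    (v : 'I_n -> R) (s : R) : Prop :=
  if (n%:R * (1 - b) <= #|[set i | v i == 0]|%:R)
  then s = 0
  else 0 < s /\ n%:R^-1 * \sum_(i < n) rho0 (v i / s) = b.

Definition count_zero (R : realType) (n p q : nat) (x : 'I_n -> 'cV[R]_p)
    (y : 'I_n -> 'cV[R]_q) (v : 'cV[R]_p) (w : 'cV[R]_q) : nat :=
  #|[set i : 'I_n | v^T *m x i + w^T *m y i == 0]|.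

Definition k_n (R : realType) (n p q : nat) (x : 'I_n -> 'cV[R]_p)
    (y : 'I_n -> 'cV[R]_q) : nat :=
  \max_(k < n.+1 | `[< exists (v : 'cV[R]_p) (w : 'cV[R]_q),
                        (v != 0 \/ w != 0) /\ count_zero x y v w = k >]) k.

Definition S_obj (R : realType) (n p q : nat) (x : 'I_n -> 'cV[R]_p)
    (y : 'I_n -> 'cV[R]_q) (rho1 : R -> R) (sigma : R)
    (B : 'M[R]_(p, q)) (G : 'M[R]_q) : R :=
  \sum_(i < n) rho1 (mahal (x i) (y i) B G / sigma).

(* Main.v *)
Require Import Defs.
From HB Require Import structures.
From mathcomp Require Import all_boot all_order all_algebra.
From mathcomp Require Import all_classical all_reals all_analysis.
From mathcomp Require Import ring lra.
From mathcomp Require Import perm.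
Import Order.TTheory GRing.Theory Num.Theory.
Import numFieldNormedType.Exports.
Set Implicit Arguments. Unset Strict Implicit. Unset Printing Implicit Defensive.
Local Open Scope ring_scope.


Section Cont.
Variables (R : realType) (N : nat).
Implicit Types (f g : 'rV[R]_N -> R).

Lemma cont_cst (a : R) : continuous (fun _ : 'rV[R]_N => a).
Proof. by move=> x; apply: cst_continuous. Qed.

Lemma cont_add f g : continuous f -> continuous g -> continuous (fun v => f v + g v).
Proof. move=> cf cg x. exact: (continuousD (cf x) (cg x)). Qed.

Lemma cont_mul f g : continuous f -> continuous g -> continuous (fun v => f v * g v).
Proof. move=> cf cg x. exact: (continuousM (cf x) (cg x)). Qed.

Lemma cont_opp f : continuous f -> continuous (fun v => - f v).
Proof. move=> cf x. exact: (continuousN (cf x)). Qed.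

Lemma cont_coord k : continuous (fun v : 'rV[R]_N => v ord0 k).
Proof. exact: coord_continuous. Qed.

Lemma cont_comp (h : R -> R) f : continuous h -> continuous f -> continuous (fun v => h (f v)).
Proof. by move=> ch cf x; apply: continuous_comp; [apply: cf| apply: ch]. Qed.

Lemma cont_sum (I : Type) (r : seq I) (P : pred I) (g : I -> 'rV[R]_N -> R) :
  (forall i, continuous (g i)) -> continuous (fun v => \sum_(i <- r | P i) g i v).
Proof.
move=> cg; elim: r => [|a r IH].
  by under eq_fun do rewrite big_nil; apply: cont_cst.
under eq_fun do rewrite big_cons; case: (P a) => //.
exact: cont_add.
Qed.

Lemma cont_prod (I : Type) (r : seq I) (P : pred I) (g : I -> 'rV[R]_N -> R) :
  (forall i, continuous (g i)) -> continuous (fun v => \prod_(i <- r | P i) g i v).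
Proof.
move=> cg; elim: r => [|a r IH].
  by under eq_fun do rewrite big_nil; apply: cont_cst.
under eq_fun do rewrite big_cons; case: (P a) => //.
exact: cont_mul.
Qed.

Definition MC m n (F : 'rV[R]_N -> 'M[R]_(m, n)) := forall i j, continuous (fun v => F v i j).

Lemma MC_cst m n (M : 'M[R]_(m, n)) : MC (fun _ => M).
Proof. by move=> i j; apply: cont_cst. Qed.

Lemma MC_add m n (F G : 'rV[R]_N -> 'M[R]_(m, n)) : MC F -> MC G -> MC (fun v => F v + G v).
Proof. by move=> cF cG i j; under eq_fun do rewrite mxE; apply: cont_add. Qed.

Lemma MC_opp m n (F : 'rV[R]_N -> 'M[R]_(m, n)) : MC F -> MC (fun v => - F v).
Proof. by move=> cF i j; under eq_fun do rewrite mxE; apply: cont_opp. Qed.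

Lemma MC_tr m n (F : 'rV[R]_N -> 'M[R]_(m, n)) : MC F -> MC (fun v => (F v)^T).
Proof. by move=> cF i j; under eq_fun do rewrite mxE; apply: cF. Qed.

Lemma MC_mul m n l (F : 'rV[R]_N -> 'M[R]_(m, n)) (G : 'rV[R]_N -> 'M[R]_(n, l)) :
  MC F -> MC G -> MC (fun v => F v *m G v).
Proof.
move=> cF cG i j; under eq_fun do rewrite mxE.
by apply: cont_sum => k; apply: cont_mul.
Qed.

Lemma cont_det n (F : 'rV[R]_N -> 'M[R]_n) : MC F -> continuous (fun v => \det (F v)).
Proof.
move=> cF; rewrite /determinant; apply: cont_sum => s.
by apply: cont_mul; [apply: cont_cst|apply: cont_prod => i; apply: cF].
Qed.

End Cont.


Section QF.
Variables (R : realType) (q : nat).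
Implicit Types (A : 'M[R]_q) (u w : 'cV[R]_q).

Definition qf A u := (u^T *m A *m u) ord0 ord0.
Definition bf A u w := (u^T *m A *m w) ord0 ord0.
Definition psd A := forall u, 0 <= qf A u.

Lemma bfDl A u u' w : bf A (u + u') w = bf A u w + bf A u' w.
Proof. by rewrite /bf linearD /= !mulmxDl mxE. Qed.

Lemma bfDr A u w w' : bf A u (w + w') = bf A u w + bf A u w'.
Proof. by rewrite /bf mulmxDr mxE. Qed.

Lemma bfZl A a u w : bf A (a *: u) w = a * bf A u w.
Proof. by rewrite /bf linearZ /= -!scalemxAl mxE. Qed.

Lemma bfZr A a u w : bf A u (a *: w) = a * bf A u w.
Proof. by rewrite /bf -scalemxAr mxE. Qed.

Lemma qfE A u : qf A u = bf A u u.
Proof. by []. Qed.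

Lemma bfNl A u w : bf A (- u) w = - bf A u w.
Proof. by rewrite -scaleN1r bfZl mulN1r. Qed.

Lemma bfNr A u w : bf A u (- w) = - bf A u w.
Proof. by rewrite -scaleN1r bfZr mulN1r. Qed.

Lemma bf_sym A u w : A^T = A -> bf A u w = bf A w u.
Proof.
move=> sA; rewrite /bf.
transitivity ((u^T *m A *m w)^T ord0 ord0); first by rewrite [RHS]mxE.
rewrite (trmx_mul (u^T *m A) w) (trmx_mul u^T A) trmxK sA mulmxA //.
Qed.

Lemma qfD A u w : qf A (u + w) = qf A u + bf A u w + bf A w u + qf A w.
Proof. by rewrite !qfE bfDl !bfDr; lra. Qed.

Lemma qfN A u : qf A (- u) = qf A u.
Proof. by rewrite !qfE bfNl bfNr opprK. Qed.

Lemma qfZ A a u : qf A (a *: u) = a ^+ 2 * qf A u.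
Proof. by rewrite !qfE bfZl bfZr mulrA expr2. Qed.

Lemma qf0 A : qf A 0 = 0.
Proof. by rewrite /qf mulmx0 mxE. Qed.

Lemma qf_2 A u w : psd A -> qf A (u + w) <= 2 * qf A u + 2 * qf A w.
Proof.
move=> pA; have := pA (u - w); rewrite qfD qfN bfNr bfNl; rewrite qfD; lra.
Qed.

Lemma qf_sum A n (w : 'I_n -> 'cV[R]_q) : psd A ->
  qf A (\sum_(i < n) w i) <= 2 ^+ n * \sum_(i < n) qf A (w i).
Proof.
move=> pA; elim: n w => [|n IH] w.
  by rewrite !big_ord0 qf0 mulr0.
rewrite !big_ord_recl.
apply: le_trans (qf_2 _ _ pA) _.
have h1 := IH (fun i => w (lift ord0 i)).
have h2 := pA (w ord0).
have h3 : 0 <= \sum_(i < n) qf A (w (lift ord0 i)) by apply: sumr_ge0 => i _.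
have h4 : 1 <= 2 ^+ n :> R by rewrite exprn_ege1 // ler1n.
rewrite exprS.
have h5 : 2 * qf A (w ord0) <= 2 * 2 ^+ n * qf A (w ord0).
  by rewrite -mulrA ler_pM2l // ler_peMl.
rewrite mulrDr; apply: lerD; first exact: h5.
by rewrite -mulrA ler_pM2l.
Qed.

Lemma bf_bound A u w : psd A -> A^T = A -> 2 * `|bf A u w| <= qf A u + qf A w.
Proof.
move=> pA sA; have h1 := pA (u + w); have h2 := pA (u - w).
rewrite qfD in h1; rewrite qfD qfN bfNr bfNl in h2.
rewrite -(bf_sym u w) // in h1 h2.
have [h|h] := lerP 0 (bf A u w).
  rewrite ger0_norm //. lra.
rewrite ltr0_norm //; lra.
Qed.

End QF.


Section PD.
Variables (R : realType) (q : nat).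
Implicit Types (A : 'M[R]_q) (u w : 'cV[R]_q).

Lemma bf_delta A u k : bf A u (delta_mx k ord0) = (u^T *m A) ord0 k.
Proof. by rewrite /bf -colE mxE. Qed.

Lemma psd_posdef A : A^T = A -> psd A -> \det A != 0 ->
  forall u, u != 0 -> 0 < qf A u.
Proof.
move=> sA pA dA u u0; rewrite lt_neqAle pA andbT; apply/negP => /eqP q0.
have bz : forall w, bf A u w = 0.
  move=> w; apply/eqP/negPn/negP => b0.
  pose t := - (qf A w + 1) / (2 * bf A u w).
  have := pA (t *: u + w); rewrite qfD qfZ bfZl bfZr (bf_sym w u sA) -q0 mulr0 add0r.
  have -> : t * bf A u w = - (qf A w + 1) / 2.
    by rewrite /t; field; rewrite b0.
  lra.
move/det0P: dA; apply; exists u^T.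
  by apply: contra u0 => /eqP h; apply/eqP; apply: trmx_inj; rewrite h trmx0.
by apply/rowP => k; rewrite -bf_delta bz mxE.
Qed.

Lemma posdef_psd A : (forall u, u != 0 -> 0 < qf A u) -> psd A.
Proof.
move=> h u; have [->|u0] := eqVneq u 0; first by rewrite qf0.
exact/ltW/h.
Qed.

Lemma qf_inv A u : A^T = A -> A \in unitmx ->
  qf (invmx A) u = qf A (invmx A *m u).
Proof.
move=> sA uA; rewrite /qf trmx_mul trmx_inv sA.
by rewrite -!mulmxA (mulmxA A) mulmxV // mul1mx.
Qed.

Lemma posdef_inv A : A^T = A -> A \in unitmx ->
  (forall u, u != 0 -> 0 < qf A u) -> forall u, u != 0 -> 0 < qf (invmx A) u.
Proof.
move=> sA uA h u u0; rewrite qf_inv //; apply: h.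
apply: contra u0 => /eqP h0; apply/eqP.
by rewrite -(mulKVmx uA u) h0 mulmx0.
Qed.

End PD.


Section DetBound.
Variable R : realType.

Lemma det_bound m (M : 'M[R]_m) (K : R) : 0 <= K -> (forall i j, `|M i j| <= K) ->
  `|\det M| <= #|{perm 'I_m}|%:R * K ^+ m.
Proof.
move=> K0 hM; rewrite /determinant.
apply: le_trans (ler_norm_sum _ _ _) _.
rewrite mulr_natl -sumr_const; apply: ler_sum => s _.
rewrite normrM normr_sign mul1r normr_prod.
rewrite -[in X in _ <= X](card_ord m) -prodr_const.
by apply: ler_prod => i _; rewrite normr_ge0 hM.
Qed.

Lemma adj_bound m (M : 'M[R]_m) (K : R) : 0 <= K -> (forall i j, `|M i j| <= K) ->
  forall i j, `|\adj M i j| <= #|{perm 'I_m.-1}|%:R * K ^+ m.-1.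
Proof.
move=> K0 hM i j; rewrite mxE /cofactor normrM normrX normrN1 expr1n mul1r.
by apply: det_bound => // a b; rewrite !mxE.
Qed.

End DetBound.

Section Span.
Variables (R : realType) (n p q : nat) (x : 'I_n -> 'cV[R]_p) (y : 'I_n -> 'cV[R]_q)
  (I : {set 'I_n}).

Definition zz i : 'cV[R]_(p + q) := if i \in I then col_mx (x i) (y i) else 0.

Lemma span_coef :
  (forall (v : 'cV[R]_p) (w : 'cV[R]_q),
     (forall i, i \in I -> v^T *m x i + w^T *m y i = 0) -> v = 0 /\ w = 0) ->
  exists Cm : 'M[R]_(n, p + q),
    forall u : 'cV[R]_(p + q), u = \sum_i (Cm *m u) i ord0 *: zz i.
Proof.
move=> hspan.
pose Z : 'M[R]_(n, p + q) := \matrix_(i, k) zz i k ord0.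
have ker0 : forall r : 'rV[R]_(p + q), r *m Z^T = 0 -> r = 0.
  move=> r hr.
  have h : forall i, i \in I ->
      ((lsubmx r)^T)^T *m x i + ((rsubmx r)^T)^T *m y i = 0.
    move=> i iI; rewrite !trmxK -mul_row_col hsubmxK.
    apply/rowP => a; rewrite ord1 [RHS]mxE.
    have h0 : (r *m Z^T) ord0 i = 0 by rewrite hr mxE.
    rewrite -[RHS]h0 !mxE.
    by apply: eq_bigr => k _; rewrite [in RHS]mxE [in RHS]mxE /zz iI.
  have [h1 h2] := hspan _ _ h.
  rewrite -(hsubmxK r) -(trmxK (lsubmx r)) -(trmxK (rsubmx r)) h1 h2.
  by rewrite !trmx0 row_mx0.
have rk : \rank Z = (p + q)%N.
  have k0 : kermx Z^T = 0.
    apply/row_matrixP => k; rewrite row0; apply: ker0.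
    by apply/sub_kermxP; rewrite row_sub.
  have := mxrank_ker Z^T; rewrite k0 mxrank0 mxrank_tr => /esym/eqP.
  rewrite subn_eq0 => hle; apply/eqP; rewrite eqn_leq hle rank_leq_col.
  done.
have /row_fullP [B hB] : row_full Z by rewrite /row_full rk.
exists B^T => u.
have e : Z^T *m B^T = 1%:M by rewrite -trmx_mul hB trmx1.
rewrite -{1}(mul1mx u) -e -mulmxA.
apply/matrixP => k l; rewrite ord1 summxE mxE.
by apply: eq_bigr => i _; rewrite !mxE mulrC.
Qed.

End Span.


Section Res.
Variables (R : realType) (p q : nat).

Definition res (B : 'M[R]_(p, q)) (u : 'cV[R]_(p + q)) : 'cV[R]_q :=
  dsubmx u - B^T *m usubmx u.

Lemma res_sum B n (a : 'I_n -> R) (z : 'I_n -> 'cV[R]_(p + q)) :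
  res B (\sum_i a i *: z i) = \sum_i a i *: res B (z i).
Proof.
rewrite /res linear_sum linear_sum /= mulmx_sumr -sumrB.
by apply: eq_bigr => i _; rewrite linearZ linearZ /= -scalemxAr scalerBr.
Qed.

Lemma qf_delta (A : 'M[R]_q) j k : bf A (delta_mx j ord0) (delta_mx k ord0) = A j k.
Proof. by rewrite /bf -colE trmx_delta -rowE !mxE. Qed.

End Res.

Lemma le_sum1 (R : realType) (T : finType) (f : T -> R) :
  (forall j, 0 <= f j) -> forall i, f i <= \sum_j f j.
Proof.
move=> h i; rewrite (bigD1 i) //= lerDl; apply: sumr_ge0 => j _; exact: h.
Qed.

Section BoundI.
Variables (R : realType) (n p q : nat) (x : 'I_n -> 'cV[R]_p) (y : 'I_n -> 'cV[R]_q)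
  (I : {set 'I_n}) (M : R).

Definition ri (B : 'M[R]_(p, q)) i : 'cV[R]_q := y i - B^T *m x i.

Lemma res_zz B i : res B (zz x y I i) = if i \in I then ri B i else 0.
Proof.
rewrite /zz /res /ri; case: (i \in I); first by rewrite col_mxKu col_mxKd.
by rewrite linear0 linear0 mulmx0 subr0.
Qed.

Lemma bound_I :
  (forall (v : 'cV[R]_p) (w : 'cV[R]_q),
     (forall i, i \in I -> v^T *m x i + w^T *m y i = 0) -> v = 0 /\ w = 0) ->
  exists K : R, 0 <= K /\
    forall (B : 'M[R]_(p, q)) (A : 'M[R]_q), psd A -> A^T = A -> \det A = 1 ->
      (forall i, i \in I -> qf A (ri B i) <= M ^+ 2) ->
      (forall j k, `|A j k| <= K) /\ (forall j k, `|B j k| <= K).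
Proof.
move=> hspan; have [Cm hC] := span_coef hspan.
pose Ku (u : 'cV[R]_(p + q)) := 2 ^+ n * \sum_i ((Cm *m u) i ord0) ^+ 2 * M ^+ 2.
have Ku0 u : 0 <= Ku u.
  by rewrite /Ku mulr_ge0 // ?exprn_ge0 // sumr_ge0 // => i _; rewrite mulr_ge0 // sqr_ge0.
have hKu : forall B A, psd A -> (forall i, i \in I -> qf A (ri B i) <= M ^+ 2) ->
    forall u, qf A (res B u) <= Ku u.
  move=> B A pA hI u.
  rewrite {1}(hC u) res_sum.
  apply: le_trans (qf_sum _ pA) _.
  rewrite /Ku ler_pM2l ?exprn_gt0 //; apply: ler_sum => i _.
  rewrite qfZ res_zz; case: ifP => iI.
    by apply: ler_wpM2l; [exact: sqr_ge0 | exact: hI].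
  by rewrite qf0 mulr0 mulr_ge0 // sqr_ge0.
pose uy (k : 'I_q) : 'cV[R]_(p + q) := col_mx 0 (delta_mx k ord0).
pose ux (j : 'I_p) : 'cV[R]_(p + q) := col_mx (delta_mx j ord0) 0.
pose Ky := \sum_k Ku (uy k).
pose Kx := \sum_j Ku (ux j).
pose KG := #|{perm 'I_q.-1}|%:R * Ky ^+ q.-1.
have Ky0 : 0 <= Ky by apply: sumr_ge0 => k _.
have Kx0 : 0 <= Kx by apply: sumr_ge0 => k _.
have KG0 : 0 <= KG by rewrite mulr_ge0 // exprn_ge0.
exists (Ky + q%:R * KG * (Kx + Ky)); split.
  by rewrite addr_ge0 // mulr_ge0 // ?addr_ge0 // mulr_ge0.
move=> B A pA sA dA hI.
have hK := hKu B A pA hI.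
have hAkk k : A k k <= Ky.
  rewrite -qf_delta -qfE; apply: le_trans (le_sum1 (fun k => Ku0 (uy k)) k).
  have -> : delta_mx k ord0 = res B (uy k) by rewrite /res col_mxKu col_mxKd mulmx0 subr0.
  exact: hK.
have hAjk j k : `|A j k| <= Ky.
  have := bf_bound (delta_mx j ord0) (delta_mx k ord0) pA sA.
  rewrite !qfE !qf_delta => h.
  have h1 := hAkk j; have h2 := hAkk k; lra.
have hbx j : qf A (B^T *m delta_mx j ord0) <= Kx.
  apply: le_trans (le_sum1 (fun j => Ku0 (ux j)) j).
  rewrite -qfN.
  have -> : - (B^T *m delta_mx j ord0) = res B (ux j) by rewrite /res col_mxKu col_mxKd sub0r.
  exact: hK.
split.
  move=> j k; apply: le_trans (hAjk j k) _; rewrite lerDl mulr_ge0 // ?addr_ge0 //.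
  by rewrite mulr_ge0.
move=> j k.
have uA : A \in unitmx by rewrite unitmxE dA unitr1.
have iA : invmx A = \adj A by rewrite /invmx uA dA invr1 scale1r.
pose b : 'cV[R]_q := B^T *m delta_mx j ord0.
have -> : B j k = b k ord0 by rewrite /b -colE !mxE.
have eb : b = invmx A *m (A *m b) by rewrite mulKmx.
rewrite eb mxE iA.
apply: le_trans (ler_norm_sum _ _ _) _.
apply: le_trans (_ : _ <= \sum_(l < q) KG * (Kx + Ky)) _.
  apply: ler_sum => l _; rewrite normrM; apply: ler_pM => //.
    exact: (adj_bound Ky0 hAjk).
  have -> : (A *m b) l ord0 = bf A (delta_mx l ord0) b.
    by rewrite /bf trmx_delta -mulmxA -rowE [RHS]mxE.
  have := bf_bound (delta_mx l ord0) b pA sA; rewrite qfE qf_delta => h.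
  have h1 := hAkk l; have h2 := hbx j; rewrite -/b in h2.
  have h3 : 0 <= qf A b by apply: pA.
  have h4 : 0 <= A l l by rewrite -qf_delta -qfE; apply: pA.
  lra.
rewrite sumr_const card_ord -[X in X <= _]mulr_natl mulrA lerDr //.
Qed.

End BoundI.


Section Sel.
Variables (R : realType) (n p q : nat) (x : 'I_n -> 'cV[R]_p) (y : 'I_n -> 'cV[R]_q).

Lemma span_kn (I : {set 'I_n}) : (k_n x y < #|I|)%N ->
  forall (v : 'cV[R]_p) (w : 'cV[R]_q),
     (forall i, i \in I -> v^T *m x i + w^T *m y i = 0) -> v = 0 /\ w = 0.
Proof.
move=> hk v w h.
have key : (v != 0 \/ w != 0) -> False.
  move=> vw.
  have hlt : (count_zero x y v w < n.+1)%N.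
    by rewrite ltnS /count_zero -[X in (_ <= X)%N](card_ord n) max_card.
  have h1 : (#|I| <= count_zero x y v w)%N.
    rewrite /count_zero; apply: subset_leq_card; apply/fintype.subsetP => i iI.
    by rewrite inE h.
  have h2 : (count_zero x y v w <= k_n x y)%N.
    rewrite /k_n.
    have := @leq_bigmax_cond _ (fun k : 'I_n.+1 => `[< exists (v : 'cV[R]_p) (w : 'cV[R]_q),
                        (v != 0 \/ w != 0) /\ count_zero x y v w = k >]) (fun k => nat_of_ord k) (Ordinal hlt).
    apply; apply/asboolP; by exists v, w.
  by move: hk; rewrite ltnNge (leq_trans h1 h2).
have [v0|v0] := eqVneq v 0; have [w0|w0] := eqVneq w 0 => //.
- by case: key; right.
- by case: key; left.
- by case: key; left.
Qed.

Definition ob (rho1 : R -> R) (sigma : R) (B : 'M[R]_(p, q)) (A : 'M[R]_q) :=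
  \sum_i rho1 (Num.sqrt (qf A (ri x y B i)) / sigma).

Lemma select (rho1 : R -> R) (sigma c : R) :
  rho_function rho1 -> 0 < sigma -> 0 <= c -> c < n%:R - (k_n x y)%:R ->
  exists M : R, forall B A, psd A -> ob rho1 sigma B A <= c ->
    exists I : {set 'I_n}, (k_n x y < #|I|)%N /\
      forall i, i \in I -> qf A (ri x y B i) <= M ^+ 2.
Proof.
move=> [_ rmono r0 [_ rsup] _] s0 c0 ck.
set k := k_n x y in ck *.
have nk : 0 < n%:R - k%:R :> R by lra.
have hpos : 0 < 1 - c / (n%:R - k%:R).
  by rewrite subr_gt0 ltr_pdivrMr // mul1r.
have [u hu] := rsup _ hpos.
have hu' : c < rho1 u * (n%:R - k%:R).
  by rewrite -ltr_pdivrMr //; lra.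
have rge0 z : 0 <= rho1 z by rewrite -r0; apply: rmono; rewrite normr0.
exists (sigma * `|u|) => B A pA hob.
pose g i := rho1 (Num.sqrt (qf A (ri x y B i)) / sigma).
exists [set i | Num.sqrt (qf A (ri x y B i)) <= sigma * `|u|]; split; last first.
  move=> i; rewrite inE => hi.
  rewrite -(sqr_sqrtr (pA (ri x y B i))).
  by rewrite !expr2; apply: ler_pM => //; rewrite sqrtr_ge0.
rewrite ltnNge; apply/negP => hI.
set I := [set i | _] in hI.
have h1 : forall i, rho1 u - rho1 u * (i \in I)%:R <= g i.
  move=> i; case: (boolP (i \in I)) => iI /=.
    by rewrite mulr1 subrr rge0.
  rewrite mulr0 subr0; apply: rmono.
  move: iI; rewrite inE -ltNge => hlt.
  rewrite [X in _ <= X]ger0_norm; last by rewrite divr_ge0 ?sqrtr_ge0 // ltW.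
  by rewrite ler_pdivlMr // mulrC ltW.
have h2 : \sum_i (rho1 u - rho1 u * (i \in I)%:R) = rho1 u * (n%:R - #|I|%:R).
  rewrite sumrB -mulr_sumr sumr_const card_ord mulrBr mulr_natr; congr (_ - _).
  congr (_ * _); rewrite -[RHS]sumr_const [RHS]big_mkcond; apply: eq_bigr => i _; by case: (i \in I).

have h3 : rho1 u * (n%:R - #|I|%:R) <= c.
  by rewrite -h2; apply: le_trans hob; apply: ler_sum => i _; apply: h1.
have h4 : (#|I|%:R : R) <= k%:R by rewrite ler_nat.
have h5 := rge0 u.
nra.
Qed.

Lemma bound_all (rho1 : R -> R) (sigma c : R) :
  rho_function rho1 -> 0 < sigma -> 0 <= c -> c < n%:R - (k_n x y)%:R ->
  exists K : R, forall (B : 'M[R]_(p, q)) (A : 'M[R]_q), psd A -> A^T = A -> \det A = 1 ->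
    ob rho1 sigma B A <= c ->
    (forall j k, `|A j k| <= K) /\ (forall j k, `|B j k| <= K).
Proof.
move=> hr s0 c0 ck; have [M hM] := select hr s0 c0 ck.
have hI : forall I : {set 'I_n}, exists K : R, 0 <= K /\
   ((k_n x y < #|I|)%N -> forall (B : 'M[R]_(p, q)) (A : 'M[R]_q), psd A -> A^T = A -> \det A = 1 ->
      (forall i, i \in I -> qf A (ri x y B i) <= M ^+ 2) ->
      (forall j k, `|A j k| <= K) /\ (forall j k, `|B j k| <= K)).
  move=> I; case: (ltnP (k_n x y) #|I|) => hk.
    have [K [K0 hK]] := bound_I M (span_kn hk).
    by exists K; split => // _; exact: hK.
  by exists 0; split => //; rewrite ltnNge hk.
have [f hf] := fin_all_exists hI.
have f0 I : 0 <= f I by case: (hf I).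
exists (\sum_I f I) => B A pA sA dA hob.
have [I [hk hIq]] := hM B A pA hob.
have [_ /(_ hk B A pA sA dA hIq) [h1 h2]] := hf I.
have le1 := le_sum1 f0 I.
by split => j k; [apply: le_trans (h1 j k) le1 | apply: le_trans (h2 j k) le1].
Qed.

End Sel.


Local Open Scope classical_set_scope.
Local Open Scope ring_scope.
Section Topo.
Variables (R : realType) (n p q : nat) (x : 'I_n -> 'cV[R]_p) (y : 'I_n -> 'cV[R]_q).

Local Notation N := (p * q + q * q)%N.

Definition Bv (v : 'rV[R]_N) : 'M[R]_(p, q) :=
  \matrix_(i, j) v ord0 (lshift (q * q) (mxvec_index i j)).
Definition Av (v : 'rV[R]_N) : 'M[R]_q :=
  \matrix_(i, j) v ord0 (rshift (p * q) (mxvec_index i j)).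
Definition enc (B : 'M[R]_(p, q)) (A : 'M[R]_q) : 'rV[R]_N := row_mx (mxvec B) (mxvec A).

Lemma Bv_enc B A : Bv (enc B A) = B.
Proof. by apply/matrixP => i j; rewrite mxE row_mxEl mxvecE. Qed.
Lemma Av_enc B A : Av (enc B A) = A.
Proof. by apply/matrixP => i j; rewrite mxE row_mxEr mxvecE. Qed.

Lemma MC_Bv : MC (@Bv).
Proof. by move=> i j; under eq_fun do rewrite mxE; apply: cont_coord. Qed.
Lemma MC_Av : MC (@Av).
Proof. by move=> i j; under eq_fun do rewrite mxE; apply: cont_coord. Qed.

Lemma cont_qf i : continuous (fun v => qf (Av v) (ri x y (Bv v) i)).
Proof.
rewrite /qf /ri; apply: (MC_mul (MC_mul (MC_tr _) MC_Av) _).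
  by apply: MC_add; [apply: MC_cst | apply: MC_opp; apply: MC_mul; [apply: MC_tr; exact: MC_Bv|apply: MC_cst]].
by apply: MC_add; [apply: MC_cst | apply: MC_opp; apply: MC_mul; [apply: MC_tr; exact: MC_Bv|apply: MC_cst]].
Qed.

Lemma cont_ob (rho1 : R -> R) (sigma : R) : continuous rho1 ->
  continuous (fun v => ob x y rho1 sigma (Bv v) (Av v)).
Proof.
move=> cr; rewrite /ob; apply: cont_sum => i.
apply: cont_comp => //; apply: cont_mul; last exact: cont_cst.
apply: cont_comp; first exact: sqrt_continuous.
exact: cont_qf.
Qed.

Definition Kset (rho1 : R -> R) (sigma c : R) : set 'rV[R]_N :=
  (\bigcap_(u in [set: 'cV[R]_q]) [set v : 'rV[R]_N | 0 <= qf (Av v) u]) `&`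
  (\bigcap_(jk in [set: 'I_q * 'I_q]) [set v : 'rV[R]_N | Av v jk.1 jk.2 - Av v jk.2 jk.1 = 0]) `&`
  [set v : 'rV[R]_N | \det (Av v) = 1] `&` [set v : 'rV[R]_N | ob x y rho1 sigma (Bv v) (Av v) <= c].

Lemma Kset_closed rho1 sigma c : continuous rho1 -> closed (Kset rho1 sigma c).
Proof.
move=> cr.
have pc (g : 'rV[R]_N -> R) (D : set R) : continuous g -> closed D -> closed [set v : 'rV[R]_N | D (g v)].
  move=> cg cD; apply: (@preimage_closed _ _ g D) => // z _; exact: cg.
apply: closedI; [apply: closedI; [apply: closedI|]|].
- apply: closed_bigI => u _; apply: (pc _ [set z | 0 <= z]); last exact: closed_ge.
  rewrite /qf; exact: (MC_mul (MC_mul (MC_tr (MC_cst (M:=u))) (@MC_Av)) (MC_cst (M:=u))).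
- apply: closed_bigI => jk _; apply: (pc _ [set z | z = 0]); last exact: closed_eq.
  by apply: cont_add; [apply: MC_Av | apply: cont_opp; apply: MC_Av].
- apply: (pc _ [set z | z = 1]); last exact: closed_eq.
  exact: cont_det MC_Av.
- apply: (pc _ [set z | z <= c]); last exact: closed_le.
  exact: cont_ob.
Qed.

Lemma Kset_mem rho1 sigma c v : Kset rho1 sigma c v ->
  [/\ psd (Av v), (Av v)^T = Av v, \det (Av v) = 1 & ob x y rho1 sigma (Bv v) (Av v) <= c].
Proof.
move=> [[[hp hs] hd] ho]; split => //.
- by move=> u; exact: (hp u Logic.I).
- apply/matrixP => j k; rewrite mxE.
  by have /= /eqP := hs (k, j) Logic.I; rewrite subr_eq0 => /eqP.
Qed.

Lemma Kset_in rho1 sigma c B A : psd A -> A^T = A -> \det A = 1 ->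
  ob x y rho1 sigma B A <= c -> Kset rho1 sigma c (enc B A).
Proof.
move=> pA sA dA ho; split; [split; [split|]|] => /=.
- by move=> u _ /=; rewrite Av_enc; exact: pA.
- by move=> [j k] _ /=; rewrite Av_enc -{1}sA mxE subrr.
- by rewrite Av_enc.
- by rewrite Av_enc Bv_enc.
Qed.

Lemma Kset_bounded rho1 sigma c :
  rho_function rho1 -> 0 < sigma -> 0 <= c -> c < n%:R - (k_n x y)%:R ->
  bounded_set (Kset rho1 sigma c).
Proof.
move=> hr s0 c0 ck; have [K hK] := bound_all hr s0 c0 ck.
rewrite /= /bounded_near; near=> M0 => v Kv /=.
have [pA sA dA ho] := Kset_mem Kv.
have [hA hB] := hK _ _ pA sA dA ho.
apply: (@le_trans _ _ `|K|); last first.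
  by near: M0; apply: nbhs_pinfty_ge; rewrite num_real.
rewrite [leLHS]/Num.Def.normr /= mx_normrE; apply: bigmax_le => // -[a k] _ /=.
rewrite ord1.
case: (splitP k) => [j ej|j ej].
  have -> : k = lshift (q * q) j by apply/val_inj.
  case: (mxvec_indexP j) => a' b'.
  have -> : v ord0 (lshift (q * q) (mxvec_index a' b')) = Bv v a' b' by rewrite mxE.
  by apply: le_trans (hB a' b') (ler_norm _).
have -> : k = rshift (p * q) j by apply/val_inj.
case: (mxvec_indexP j) => a' b'.
have -> : v ord0 (rshift (p * q) (mxvec_index a' b')) = Av v a' b' by rewrite mxE.
by apply: le_trans (hA a' b') (ler_norm _).
Unshelve. all: by end_near.
Qed.


Lemma exists_min (rho1 : R -> R) (sigma c : R) :
  rho_function rho1 -> 0 < sigma -> 0 <= c -> c < n%:R - (k_n x y)%:R ->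
  forall (B0 : 'M[R]_(p, q)) (A0 : 'M[R]_q), psd A0 -> A0^T = A0 -> \det A0 = 1 ->
  ob x y rho1 sigma B0 A0 <= c ->
  exists (Bs : 'M[R]_(p, q)) (As : 'M[R]_q),
    [/\ psd As, As^T = As, \det As = 1 &
     forall B A, psd A -> A^T = A -> \det A = 1 ->
       ob x y rho1 sigma Bs As <= ob x y rho1 sigma B A].
Proof.
move=> hr s0 c0 ck B0 A0 pA0 sA0 dA0 ho0.
have cr : continuous rho1 by case: hr.
have cpt := bounded_closed_compact (Kset_bounded hr s0 c0 ck) (Kset_closed (sigma:=sigma) (c:=c) cr).
have ne : Kset rho1 sigma c !=set0 by exists (enc B0 A0); exact: Kset_in.
have [vs vsK hmin] := compact_EVT_min ne cpt (continuous_subspaceT (cont_ob (sigma:=sigma) cr)).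
move/set_mem: vsK => vsK.
have [pA sA dA ho] := Kset_mem vsK.
exists (Bv vs), (Av vs); split => // B A pB sB dB.
case: (lerP (ob x y rho1 sigma B A) c) => h.
  have := hmin (enc B A) (mem_set (Kset_in pB sB dB h)).
  by rewrite Bv_enc Av_enc.
exact: le_trans ho (ltW h).
Qed.

End Topo.

Unset Implicit Arguments.
Set Strict Implicit.
Local Close Scope classical_set_scope.
Local Open Scope ring_scope.


Lemma S_ob (R : realType) (n p q : nat) (x : 'I_n -> 'cV[R]_p) (y : 'I_n -> 'cV[R]_q)
  rho1 sigma B G : S_obj x y rho1 sigma B G = ob x y rho1 sigma B (invmx G).
Proof. by []. Qed.

Lemma posdef_inv2 (R : realType) (q : nat) (G : 'M[R]_q) : posdef G -> \det G = 1 ->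
  [/\ psd (invmx G), (invmx G)^T = invmx G & \det (invmx G) = 1].
Proof.
move=> [sG pG] dG; have uG : G \in unitmx by rewrite unitmxE dG unitr1.
split.
- exact: posdef_psd (posdef_inv sG uG pG).
- by rewrite trmx_inv sG.
- by rewrite det_inv dG invr1.
Qed.

Theorem theorem1 (R : realType) (n p q : nat)
    (x : 'I_n -> 'cV[R]_p) (y : 'I_n -> 'cV[R]_q)
    (rho0 rho1 : R -> R)
    (Btil : 'M[R]_(p, q)) (Sigtil : 'M[R]_q) (sigma : R) :
  rho_function rho0 -> rho_function rho1 ->
  (forall u, rho1 u <= rho0 u) ->
  posdef Sigtil -> \det Sigtil = 1 ->
  is_Mscale rho0 (1 / 2) (fun i => mahal (x i) (y i) Btil Sigtil) sigma ->
  (k_n x y)%:R / n%:R < 1 / 2 :> R ->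
  exists (Bh : 'M[R]_(p, q)) (Gh : 'M[R]_q),
    [/\ posdef Gh, \det Gh = 1 &
        forall (B : 'M[R]_(p, q)) (G : 'M[R]_q), posdef G -> \det G = 1 ->
          S_obj x y rho1 sigma Bh Gh <= S_obj x y rho1 sigma B G].
Proof.
move=> hr0 hr1 hle pS dS hM hk.
have [_ mono1 r10 _ _] := hr1.
move: hM; rewrite /is_Mscale; case: ifP => hc.
  move=> ->; exists 0, 1%:M; split.
  - split; first exact: trmx1.
    move=> v v0; rewrite mulmx1 mxE.
    have [k hk0] : exists k, v k ord0 != 0.
      apply: contrapT => hn; move/eqP: v0; apply; apply/matrixP => i j.
      rewrite ord1 mxE; apply/eqP/negPn/negP => h; apply: hn; by exists i.
    apply: lt_le_trans (_ : 0 < v k ord0 * v k ord0) _.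
      by rewrite -expr2 exprn_even_gt0.
    have := @le_sum1 R _ (fun j => v^T ord0 j * v j ord0) _ k.
    rewrite mxE; apply => j; rewrite mxE -expr2; exact: sqr_ge0.
  - exact: det1.
  - move=> B G _ _; rewrite /S_obj !big1 // => i _; by rewrite invr0 mulr0 r10.
move=> [s0 hs].
have nR : 0 < n%:R :> R.
  rewrite ltr0n lt0n; apply/negP => /eqP n0'.
  have e : (n%:R : R) = 0 by rewrite n0'.
  by move: hs; rewrite e invr0 mul0r => /esym/eqP; rewrite mul1r invr_eq0 pnatr_eq0.
have hsum : \sum_i rho0 (mahal (x i) (y i) Btil Sigtil / sigma) = n%:R / 2.
  have := congr1 (fun z => n%:R * z) hs; rewrite /= mulrA mulfV ?mul1r ?gt_eqF //.
have ck : n%:R / 2 < n%:R - (k_n x y)%:R :> R.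
  move: hk; rewrite ltr_pdivrMr // => h; lra.
have c0 : 0 <= n%:R / 2 :> R by rewrite divr_ge0 // ler0n.
have [pA0 sA0 dA0] := @posdef_inv2 _ _ _ pS dS.
have ho0 : ob x y rho1 sigma Btil (invmx Sigtil) <= n%:R / 2.
  by rewrite -hsum -S_ob; apply: ler_sum => i _; exact: hle.
have [Bs [As [pAs sAs dAs hmin]]] := exists_min hr1 s0 c0 ck pA0 sA0 dA0 ho0.
have uAs : As \in unitmx by rewrite unitmxE dAs unitr1.
have pdAs : posdef As.
  by split => //; apply: psd_posdef => //; rewrite dAs oner_eq0.
exists Bs, (invmx As); split.
- case: pdAs => _ h; split; first by rewrite trmx_inv sAs.
  exact: posdef_inv sAs uAs h.
- by rewrite det_inv dAs invr1.
move=> B G pG dG; rewrite !S_ob invmxK.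
have [pA sA dA] := @posdef_inv2 _ _ _ pG dG.
exact: hmin.
Qed.
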